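(* Let $a,b,c$ be symbols of rank $0$, $1$ and $2$, respectively. There is a family of trees $(t_n)_{n\ge1}$ with all labels in $\{a,b,c\}$ and a constant $C>0$ such that: $|t_n|\in\Theta(n)$; for every $n$ and every subtree $s$ of $t_n$ (rooted at any node), the depth of $s$ is at most $C\log_2(|s|+1)$; and the minimal dag of $t_n$ has $\Omega\big(\frac{n\log\log n}{\log n}\big)$ nodes.
   Context: Trees are finite rooted ordered trees whose nodes are labelled by ranked symbols, a node labelled by a symbol of rank $k$ having exactly $k$ ordered children; $|t|$ is the number of nodes and the depth is the maximal number of edges on a root-to-leaf path. The minimal dag of a tree has one node for each isomorphism class (as labelled ordered trees) of subtrees; its size is its number of nodes. *)

(* Defs.v *)
From Stdlib Require Import Reals List.
Import ListNotations.

Inductive tree : Type :=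
| Ta : tree
| Tb : tree -> tree
| Tc : tree -> tree -> tree.

Definition tree_eq_dec (s t : tree) : {s = t} + {s <> t}.
Proof. decide equality. Defined.

Fixpoint size (t : tree) : nat :=
  match t with
  | Ta => 1
  | Tb u => S (size u)
  | Tc u v => S (size u + size v)
  end.

Fixpoint depth (t : tree) : nat :=
  match t with
  | Ta => 0
  | Tb u => S (depth u)
  | Tc u v => S (Nat.max (depth u) (depth v))
  end.

Fixpoint subtrees (t : tree) : list tree :=
  match t with
  | Ta => [Ta]
  | Tb u => Tb u :: subtrees u
  | Tc u v => Tc u v :: (subtrees u ++ subtrees v)
  end.

(* size of the minimal dag = number of isomorphism classes of subtrees;
   isomorphism of labelled ordered trees is equality in [tree]. *)
Definition dag_size (t : tree) : nat :=
  length (nodup tree_eq_dec (subtrees t)).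

Definition log2R (x : R) : R := ln x / ln 2.

(* Main.v *)
Require Import Defs.
From Stdlib Require Import Reals List Arith Lia Lra Psatz.
Import ListNotations.

Definition Pt := Tb (Tb Ta).
Definition Qt := Tc Ta Ta.

Fixpoint g (j i : nat) : tree :=
  match j with
  | 0 => if Nat.eqb (i mod 2) 0 then Qt else Pt
  | S j' => Tc (g j' i) (g j' (i / 2 ^ (2 ^ j')))
  end.

Fixpoint iterb (m : nat) (x : tree) : tree :=
  match m with 0 => x | S m' => Tb (iterb m' x) end.

Definition item k i := iterb k (g k i).

Fixpoint top k h b :=
  match h with
  | 0 => item k b
  | S h' => Tc (top k h' b) (top k h' (b + 2 ^ h'))
  end.

Lemma size_g : forall j i, size (g j i) + 1 = 2 ^ (j + 2).
Proof.
  induction j; intros i.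
  - cbn [g]. destruct (i mod 2 =? 0); reflexivity.
  - simpl g. cbn [size]. rewrite Nat.pow_add_r in *.
    specialize (IHj i) as H1. specialize (IHj (i / 2 ^ 2 ^ j)) as H2.
    rewrite Nat.pow_succ_r'. lia.
Qed.

Lemma depth_g : forall j i, depth (g j i) <= j + 2.
Proof.
  induction j; intros i.
  - cbn [g]. destruct (i mod 2 =? 0); simpl; lia.
  - simpl. specialize (IHj i) as H1. specialize (IHj (i / 2 ^ 2 ^ j)) as H2. lia.
Qed.

Lemma size_iterb : forall m x, size (iterb m x) = m + size x.
Proof. induction m; intros; simpl; auto. Qed.
Lemma depth_iterb : forall m x, depth (iterb m x) = m + depth x.
Proof. induction m; intros; simpl; auto. Qed.

Lemma size_item : forall k i, size (item k i) + 1 = 2 ^ (k + 2) + k.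
Proof. intros. unfold item. rewrite size_iterb. pose proof (size_g k i). lia. Qed.

Lemma depth_item : forall k i, depth (item k i) <= 2 * k + 2.
Proof. intros. unfold item. rewrite depth_iterb. pose proof (depth_g k i). lia. Qed.

Lemma size_top : forall k h b, size (top k h b) + 1 = 2 ^ h * (2 ^ (k + 2) + k).
Proof.
  intros k; induction h; intros b.
  - simpl. rewrite size_item. lia.
  - cbn [top size]. pose proof (IHh b). pose proof (IHh (b + 2 ^ h)).
    rewrite Nat.pow_succ_r'. lia.
Qed.

Lemma depth_top : forall k h b, depth (top k h b) <= h + 2 * k + 2.
Proof.
  intros k; induction h; intros b.
  - simpl. apply depth_item.
  - cbn [top depth]. pose proof (IHh b). pose proof (IHh (b + 2 ^ h)). lia.
Qed.

Definition ok s := depth s <= 2 * Nat.log2 (size s + 1).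

Lemma ok_Tc : forall u v, ok (Tc u v) -> Forall ok (subtrees u) ->
  Forall ok (subtrees v) -> Forall ok (subtrees (Tc u v)).
Proof. intros. simpl. constructor; auto. apply Forall_app; auto. Qed.

Lemma ok_Tb : forall u, ok (Tb u) -> Forall ok (subtrees u) ->
  Forall ok (subtrees (Tb u)).
Proof. intros. simpl. constructor; auto. Qed.

Lemma ok_g : forall j i, Forall ok (subtrees (g j i)).
Proof.
  induction j; intros i.
  - cbn [g]. destruct (i mod 2 =? 0); simpl; repeat constructor; unfold ok; simpl; lia.
  - simpl g. apply ok_Tc; auto. unfold ok.
    replace (size (Tc (g j i) (g j (i / 2 ^ 2 ^ j))) + 1) with (size (g (S j) i) + 1) by reflexivity.
    rewrite size_g, Nat.log2_pow2 by lia.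
    pose proof (depth_g (S j) i). simpl g in H. lia.
Qed.

Lemma ok_iterb : forall k i m, m <= k -> Forall ok (subtrees (iterb m (g k i))).
Proof.
  intros k i; induction m; intros Hm.
  - apply ok_g.
  - simpl. apply ok_Tb; [|apply IHm; lia].
    unfold ok. change (Tb (iterb m (g k i))) with (iterb (S m) (g k i)).
    rewrite depth_iterb, size_iterb.
    pose proof (depth_g k i). pose proof (size_g k i).
    assert (Nat.log2 (2 ^ (k + 2)) <= Nat.log2 (S m + size (g k i) + 1)).
    { apply Nat.log2_le_mono. lia. }
    rewrite Nat.log2_pow2 in H1 by lia. lia.
Qed.

Lemma ok_top : forall k h b, Forall ok (subtrees (top k h b)).
Proof.
  intros k; induction h; intros b.
  - simpl. apply ok_iterb. lia.
  - cbn [top]. apply ok_Tc; auto. unfold ok.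
    change (Tc (top k h b) (top k h (b + 2 ^ h))) with (top k (S h) b).
    rewrite size_top. pose proof (depth_top k (S h) b).
    assert (Nat.log2 (2 ^ (S h + k + 2)) <= Nat.log2 (2 ^ S h * (2 ^ (k + 2) + k))).
    { apply Nat.log2_le_mono. rewrite <- Nat.add_assoc, (Nat.pow_add_r 2 (S h)). 
      apply Nat.mul_le_mono_l. lia. }
    rewrite Nat.log2_pow2 in H0 by lia. lia.
Qed.
Lemma self_in : forall t, In t (subtrees t).
Proof. destruct t; simpl; auto. Qed.

Lemma sub_trans : forall u t s, In s (subtrees t) -> In t (subtrees u) -> In s (subtrees u).
Proof.
  induction u; intros t s Hs Ht; simpl in Ht.
  - destruct Ht as [<-|[]]. exact Hs.
  - destruct Ht as [<-|Ht]. exact Hs. simpl. right. eapply IHu; eauto.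
  - destruct Ht as [<-|Ht]. exact Hs. simpl. right. apply in_app_iff in Ht.
    apply in_app_iff. destruct Ht; [left; eapply IHu1|right; eapply IHu2]; eauto.
Qed.

Lemma iterb_in : forall x m j, j <= m -> In (iterb j x) (subtrees (iterb m x)).
Proof.
  intros x; induction m; intros j Hj.
  - replace j with 0 by lia. apply self_in.
  - destruct (Nat.eq_dec j (S m)) as [->|]. apply self_in.
    simpl. right. apply IHm. lia.
Qed.

Lemma item_in : forall k h b i, b <= i < b + 2 ^ h -> In (item k i) (subtrees (top k h b)).
Proof.
  intros k; induction h; intros b i Hi.
  - simpl in Hi. replace i with b by lia. simpl. apply self_in.
  - rewrite Nat.pow_succ_r' in Hi. cbn [top subtrees]. right. apply in_app_iff.
    destruct (Nat.lt_ge_cases i (b + 2 ^ h)).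
    + left. apply IHh. lia.
    + right. apply IHh. lia.
Qed.

Definition notb x := match x with Tb _ => False | _ => True end.

Lemma iterb_inj : forall j j' x y, notb x -> notb y -> iterb j x = iterb j' y -> j = j' /\ x = y.
Proof.
  induction j; destruct j'; intros x y Hx Hy E; simpl in E.
  - auto.
  - subst x. simpl in Hx. contradiction.
  - subst y. simpl in Hy. contradiction.
  - injection E as E. destruct (IHj j' x y Hx Hy E). auto.
Qed.

Lemma g_inj : forall j i i', g j i = g j i' -> i mod 2 ^ (2 ^ j) = i' mod 2 ^ (2 ^ j).
Proof.
  induction j; intros i i' E.
  - cbn [g] in E. simpl (2 ^ 2 ^ 0).
    pose proof (Nat.mod_upper_bound i 2). pose proof (Nat.mod_upper_bound i' 2).
    destruct (i mod 2 =? 0) eqn:E1; destruct (i' mod 2 =? 0) eqn:E2;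
      try discriminate; rewrite ?Nat.eqb_eq, ?Nat.eqb_neq in *; lia.
  - cbn [g] in E. injection E as E1 E2. apply IHj in E1. apply IHj in E2.
    assert (2 ^ 2 ^ S j = 2 ^ 2 ^ j * 2 ^ 2 ^ j) as ->.
    { rewrite Nat.pow_succ_r', <- Nat.pow_add_r. f_equal. lia. }
    assert (2 ^ 2 ^ j <> 0) by (apply Nat.pow_nonzero; lia).
    rewrite !Nat.Div0.mod_mul_r. rewrite E1, E2. reflexivity.
Qed.

Definition spine k h := map (fun x => iterb (x mod (k+1)) (g k (x / (k+1)))) (seq 0 (2 ^ h * (k + 1))).

Lemma dag_lower : forall k h, 1 <= k -> h <= 2 ^ k ->
  2 ^ h * (k + 1) <= dag_size (top k h 0).
Proof.
  intros k h Hk Hh. unfold dag_size.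
  replace (2 ^ h * (k + 1)) with (length (spine k h)) by (unfold spine; rewrite length_map, length_seq; auto).
  apply NoDup_incl_length.
  - unfold spine. apply NoDup_map_NoDup_ForallPairs; [|apply seq_NoDup].
    intros x y Hx Hy E. apply in_seq in Hx, Hy.
    destruct k as [|k']; [lia|].
    apply iterb_inj in E; [|simpl; auto|simpl; auto]. destruct E as [E1 E2].
    apply g_inj in E2.
    assert (2 ^ h <= 2 ^ 2 ^ S k') by (apply Nat.pow_le_mono_r; lia).
    assert (x / (S k' + 1) < 2 ^ h) by (apply Nat.Div0.div_lt_upper_bound; lia).
    assert (y / (S k' + 1) < 2 ^ h) by (apply Nat.Div0.div_lt_upper_bound; lia).
    rewrite !Nat.mod_small in E2 by lia.
    rewrite (Nat.div_mod_eq x (S k' + 1)), (Nat.div_mod_eq y (S k' + 1)). lia.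
  - intros s Hs. apply nodup_In. unfold spine in Hs. apply in_map_iff in Hs.
    destruct Hs as [x [<- Hx]]. apply in_seq in Hx.
    eapply sub_trans; [apply iterb_in|].
    2: { apply item_in. split. lia. simpl. apply Nat.Div0.div_lt_upper_bound. lia. }
    pose proof (Nat.mod_upper_bound x (k + 1)). lia.
Qed.
Definition kof n := Nat.log2_up (Nat.log2 n).
Definition S1 n := 2 ^ (kof n + 2) + kof n.
Definition hof n := Nat.log2 (n / S1 n).
Definition tt n := top (kof n) (hof n) 0.

Lemma pow_big : forall l, 6 <= l -> 10 * l <= 2 ^ l.
Proof.
  induction l; intros H. lia.
  destruct (Nat.eq_dec l 5) as [->|]. simpl. lia.
  rewrite Nat.pow_succ_r'. specialize (IHl ltac:(lia)). lia.
Qed.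

Lemma facts : forall n, 64 <= n ->
  let l := Nat.log2 n in let k := kof n in let h := hof n in
  6 <= l /\ 2 ^ l <= n /\ n < 2 ^ S l /\ 1 <= k /\ l <= 2 ^ k /\ h <= 2 ^ k /\
  size (tt n) <= n /\ n <= 2 * size (tt n) + 1 /\ n < 20 * l * 2 ^ h.
Proof.
  intros n Hn l k h.
  assert (El : l = Nat.log2 n) by reflexivity.
  assert (Ek : k = Nat.log2_up l) by reflexivity.
  assert (Eh : h = Nat.log2 (n / S1 n)) by reflexivity.
  assert (ES : S1 n = 2 ^ (k + 2) + k) by reflexivity.
  assert (Hsz : size (tt n) + 1 = 2 ^ h * S1 n) by (unfold tt; rewrite size_top; reflexivity).
  clearbody l k h.
  assert (Hl : 6 <= l). { rewrite El. change 6 with (Nat.log2 64). apply Nat.log2_le_mono. lia. }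
  destruct (Nat.log2_spec n ltac:(lia)) as [Hl1 Hl2]. rewrite <- El in Hl1, Hl2.
  destruct (Nat.log2_up_spec l ltac:(lia)) as [Hk1 Hk2]. rewrite <- Ek in Hk1, Hk2.
  assert (Hk : 1 <= k). { destruct k. simpl in Hk2. lia. lia. }
  assert (Hk3 : 2 ^ k < 2 * l). { destruct k as [|k']. lia. rewrite Nat.pow_succ_r'. simpl in Hk1. lia. }
  assert (Hk4 : k < 2 ^ k) by (apply Nat.pow_gt_lin_r; lia).
  assert (HS : S1 n <= 10 * l).
  { rewrite ES. rewrite Nat.pow_add_r. simpl (2 ^ 2). lia. }
  assert (HS0 : 0 < S1 n) by (rewrite ES; pose proof (Nat.pow_nonzero 2 (k + 2)); lia).
  pose proof (pow_big l Hl).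
  assert (Hq : 0 < n / S1 n) by (apply Nat.div_str_pos; lia).
  destruct (Nat.log2_spec _ Hq) as [Hh1 Hh2]. rewrite <- Eh in Hh1, Hh2.
  set (q := n / S1 n) in *.
  assert (Hqn : q <= n) by (apply Nat.Div0.div_le_upper_bound; rewrite <- (Nat.mul_1_l n) at 1; apply Nat.mul_le_mono_r; lia).
  assert (Hh : h <= l) by (rewrite Eh, El; apply Nat.log2_le_mono; lia).
  pose proof (Nat.div_mod_eq n (S1 n)). fold q in H0.
  pose proof (Nat.mod_upper_bound n (S1 n) ltac:(lia)).
  rewrite Nat.pow_succ_r' in Hh2.
  repeat split; try lia.
  - nia.
  - nia.
  - nia.
Qed.
Open Scope R_scope.

Lemma ln_le' : forall x y, 0 < x -> x <= y -> ln x <= ln y.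
Proof. intros x y Hx Hxy. destruct (Rle_lt_or_eq_dec _ _ Hxy) as [H|<-].
  left. apply ln_increasing; auto. right; reflexivity. Qed.

Lemma ln2_pos : 0 < ln 2.
Proof. pose proof ln_lt_2. lra. Qed.

Lemma ln2_lt1 : ln 2 < 1.
Proof. pose proof (exp_ineq1 1 ltac:(lra)). 
  assert (ln 2 < ln (exp 1)) by (apply ln_increasing; lra). rewrite ln_exp in H0. exact H0. Qed.

Lemma ln_powINR : forall j, ln (INR (2 ^ j)) = INR j * ln 2.
Proof. intros. rewrite pow_INR. apply ln_pow. simpl; lra. Qed.

Lemma log2_R : forall x, (0 < x)%nat -> INR (Nat.log2 x) * ln 2 <= ln (INR x).
Proof.
  intros x Hx. destruct (Nat.log2_spec x Hx) as [H1 _].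
  rewrite <- ln_powINR. apply ln_le'.
  - apply lt_0_INR. apply Nat.neq_0_lt_0. apply Nat.pow_nonzero. lia.
  - apply le_INR. exact H1.
Qed.

Lemma log2_R' : forall x, (0 < x)%nat -> INR (Nat.log2 x) <= log2R (INR x).
Proof.
  intros x Hx. pose proof (log2_R x Hx). pose proof ln2_pos. unfold log2R.
  apply Rmult_le_reg_r with (ln 2); auto. unfold Rdiv. rewrite Rmult_assoc, Rinv_l; lra.
Qed.

Theorem mainTheorem8 :
  exists (t : nat -> tree) (C : R),
    0 < C /\
    (* |t_n| in Theta(n) *)
    (exists (c1 c2 : R) (N : nat), 0 < c1 /\ 0 < c2 /\
       forall n : nat, (1 <= n)%nat -> (N <= n)%nat ->
         c1 * INR n <= INR (size (t n)) <= c2 * INR n) /\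
    (* every subtree s of every t_n has depth at most C log2(|s|+1) *)
    (forall n : nat, (1 <= n)%nat ->
       forall s : tree, In s (subtrees (t n)) ->
         INR (depth s) <= C * log2R (INR (size s) + 1)) /\
    (* minimal dag of t_n has Omega(n log log n / log n) nodes *)
    (exists (d : R) (N : nat), 0 < d /\
       forall n : nat, (1 <= n)%nat -> (N <= n)%nat ->
         d * (INR n * ln (ln (INR n)) / ln (INR n)) <= INR (dag_size (t n))).
Proof.
  exists tt, 2. split; [lra|]. split; [|split].
  - exists (1/4), 1, 64%nat. split; [lra|]. split; [lra|].
    intros n _ Hn. destruct (facts n Hn) as (_&_&_&_&_&_&H1&H2&_).
    apply le_INR in H1. apply le_INR in H2. rewrite plus_INR, mult_INR in H2. simpl in H2.
    pose proof (le_INR 64 n Hn). simpl in H. lra.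
  - intros n _ s Hs. pose proof (ok_top (kof n) (hof n) 0) as F.
    rewrite Forall_forall in F. specialize (F s Hs). unfold ok in F.
    apply le_INR in F. rewrite mult_INR in F. simpl (INR 2) in F.
    rewrite <- S_INR, <- Nat.add_1_r. pose proof (log2_R' (size s + 1) ltac:(lia)). lra.
  - exists (1/20), 64%nat. split; [lra|]. intros n _ Hn.
    destruct (facts n Hn) as (Hl&Hl1&Hl2&Hk&Hlk&Hhk&_&_&H20).
    set (l := Nat.log2 n) in *. set (k := kof n) in *. set (h := hof n) in *.
    pose proof (dag_lower k h Hk Hhk) as Hd. unfold tt. fold k h.
    apply le_INR in Hd. rewrite mult_INR, plus_INR in Hd. simpl (INR 1) in Hd.
    apply lt_INR in H20. rewrite !mult_INR in H20.
    set (N := INR n) in *. set (L := INR l) in *. set (K := INR k) in *. set (H := INR (2 ^ h)) in *.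
    set (D := INR (dag_size (top k h 0))) in *.
    assert (HN : 64 <= N) by (apply le_INR in Hn; simpl in Hn; unfold N; lra).
    assert (HL : 6 <= L) by (apply le_INR in Hl; simpl in Hl; unfold L; lra).
    assert (HK : 1 <= K) by (apply le_INR in Hk; simpl in Hk; unfold K; lra).
    assert (E20 : INR 20 = 20) by (simpl; lra). rewrite E20 in H20.
    assert (HH : 0 <= H) by apply pos_INR.
    pose proof ln2_pos. pose proof ln2_lt1.
    assert (HLN : L * ln 2 <= ln N) by (apply log2_R; lia).
    assert (HLN2 : ln N < (L + 1) * ln 2).
    { unfold L. rewrite <- S_INR. rewrite <- ln_powINR.
      apply ln_increasing. lra. apply lt_INR. exact Hl2. }
    assert (HLL : ln (ln N) <= (K + 1) * ln 2).
    { unfold K. rewrite <- S_INR. rewrite <- ln_powINR. apply ln_le'. nra.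
      apply le_INR in Hlk. rewrite pow_INR in Hlk |- *. simpl (INR 2) in Hlk |- *.
      rewrite <- tech_pow_Rmult. fold L in Hlk. nra. }
    set (LN := ln N) in *. set (LL := ln LN) in *.
    assert (HLNp : 0 < LN) by nra.
    set (X := LL / LN).
    assert (EX : LL = X * LN) by (unfold X; field; lra).
    assert (HX : X * L <= K + 1).
    { destruct (Rle_or_lt X 0). nra.
      assert (X * L * ln 2 <= (K + 1) * ln 2) by nra. nra. }
    replace (N * LL / LN) with (N * X) by (unfold X, Rdiv; ring).
    assert (N * X * L <= N * (K + 1)) by nra.
    assert (N * (K + 1) <= 20 * L * H * (K + 1)) by nra.
    assert (N * X <= 20 * H * (K + 1)) by nra.
    nra.
Qed.
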